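(* Let $q_1,\dots,q_8$ be the eight points $(\pm1,\pm1,\pm1)$ of $\mathbb{R}^3$, let $t\in(0,1)$ and $q_{j+8}=tq_j$ ($j=1,\dots,8$), so that these are the vertices of two nested cubes with ratio of edges $t$. Place mass $\mu_1$ at each of $q_1,\dots,q_8$ and mass $\mu_2\neq0$ at each of $q_9,\dots,q_{16}$. Then the configuration is a central configuration if and only if $$\frac{\mu_1}{\mu_2}=-\frac{24c(t)-\frac{\sqrt3t+\sqrt3}{3(t+1)^3}-\frac{3(t+3)}{(3t^2+2t+3)^{3/2}}+\frac{3(t-3)}{(3t^2-2t+3)^{3/2}}-\frac{\sqrt3t-\sqrt3}{3(t-1)^3}}{24c(t)-\frac{\sqrt3}{12}-\frac{3\sqrt2}{8}-\frac34},$$ where $c(t)=-\gamma_0(t)/\gamma_1(t)$ with $$\gamma_1(t)=-\left((2\sqrt3+9\sqrt2+18)t-\frac{72(t^2+6t+1)}{(3t^2+2t+3)^{3/2}}+\frac{72(t^2-6t+1)}{(3t^2-2t+3)^{3/2}}-\frac{8\sqrt3}{t+1}-\frac{8\sqrt3}{t-1}+\frac{2\sqrt3+9\sqrt2+18}{t^2}\right),$$ $$\begin{aligned}\gamma_0(t)=&-\frac{9(3t+1)(t+3)}{(3t^2+2t+3)^3}+\frac{9(3t-1)(t-3)}{(3t^2-2t+3)^3}+\frac{6\sqrt3\sqrt2+12\sqrt3+54\sqrt2+83}{96t^2}\\&-\frac{4\sqrt3}{(3t^2+2t+3)^{3/2}(t+1)}-\frac{2\sqrt3}{(3t^2-2t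+3)^{3/2}(t+1)}-\frac{2\sqrt3}{(3t^2+2t+3)^{3/2}(t-1)}-\frac{4\sqrt3}{(3t^2-2t+3)^{3/2}(t-1)}\\&-\frac{144t}{(3t^2+2t+3)^{3/2}(3t^2-2t+3)^{3/2}}-\frac{1}{3(t+1)^4}+\frac{1}{3(t-1)^4}.\end{aligned}$$
   Context: A configuration $q=(q_1,\dots,q_N)$ of distinct points in $\mathbb{R}^3$ with masses $m_1,\dots,m_N$ is a central configuration if there exists $c\in\mathbb{R}$ such that $\sum_{j\neq i} m_j\left(\frac{1}{|q_j-q_i|^3}-c\right)(q_j-q_i)=0$ for all $i=1,\dots,N$. *)

(* Defs.v *)
From HB Require Import structures.
From mathcomp Require Import all_boot all_order all_algebra.
From mathcomp Require Import reals.
Set Implicit Arguments. Unset Strict Implicit. Unset Printing Implicit Defensive.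
Import Order.TTheory GRing.Theory Num.Theory.
Local Open Scope ring_scope.

Definition enorm (R : realType) (v : 'rV[R]_3) : R :=
  Num.sqrt (\sum_(k < 3) v ord0 k ^+ 2).

Definition central_configuration (R : realType) (N : nat)
    (q : 'I_N -> 'rV[R]_3) (m : 'I_N -> R) : Prop :=
  (forall i j : 'I_N, i != j -> q i != q j) /\
  exists c : R, forall i : 'I_N,
    \sum_(j < N | j != i)
       (m j * ((enorm (q j - q i)) ^- 3 - c)) *: (q j - q i) = 0.

Definition sgb (R : realType) (b : bool) : R := if b then -1 else 1.

(* The k-th vertex (k mod 8) of the cube (+-1,+-1,+-1), enumerated by bits. *)
Definition cube_vertex (R : realType) (k : nat) : 'rV[R]_3 :=
  \row_(j < 3) sgb R (odd (k %/ 2 ^ j)).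

Definition nested_cubes (R : realType) (t : R) (i : 'I_16) : 'rV[R]_3 :=
  if (i < 8)%N then cube_vertex R i else t *: cube_vertex R (i - 8).

Definition nested_masses (R : realType) (mu1 mu2 : R) (i : 'I_16) : R :=
  if (i < 8)%N then mu1 else mu2.

Definition pow32 (R : realType) (x : R) : R := Num.sqrt x ^+ 3.

Section Formulas.
Variable R : realType.
Implicit Types t : R.
Local Notation s3 := (Num.sqrt (3 : R)).
Local Notation s2 := (Num.sqrt (2 : R)).
Definition PA t : R := 3 * t ^+ 2 + 2 * t + 3.
Definition PB t : R := 3 * t ^+ 2 - 2 * t + 3.

Definition gamma1 t : R :=
  - ((2 * s3 + 9 * s2 + 18) * t
     - 72 * (t ^+ 2 + 6 * t + 1) / pow32 (PA t)
     + 72 * (t ^+ 2 - 6 * t + 1) / pow32 (PB t)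
     - 8 * s3 / (t + 1) - 8 * s3 / (t - 1)
     + (2 * s3 + 9 * s2 + 18) / t ^+ 2).

Definition gamma0 t : R :=
  - (9 * (3 * t + 1) * (t + 3)) / (PA t) ^+ 3
  + 9 * (3 * t - 1) * (t - 3) / (PB t) ^+ 3
  + (6 * s3 * s2 + 12 * s3 + 54 * s2 + 83) / (96 * t ^+ 2)
  - 4 * s3 / (pow32 (PA t) * (t + 1))
  - 2 * s3 / (pow32 (PB t) * (t + 1))
  - 2 * s3 / (pow32 (PA t) * (t - 1))
  - 4 * s3 / (pow32 (PB t) * (t - 1))
  - 144 * t / (pow32 (PA t) * pow32 (PB t))
  - 1 / (3 * (t + 1) ^+ 4)
  + 1 / (3 * (t - 1) ^+ 4).

Definition cfun t : R := - gamma0 t / gamma1 t.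

Definition mass_ratio t : R :=
  - (24 * cfun t
     - (s3 * t + s3) / (3 * (t + 1) ^+ 3)
     - 3 * (t + 3) / pow32 (PA t)
     + 3 * (t - 3) / pow32 (PB t)
     - (s3 * t - s3) / (3 * (t - 1) ^+ 3))
  / (24 * cfun t - s3 / 12 - 3 * s2 / 8 - 3 / 4).
End Formulas.

(* Main.v *)
Require Import Defs.
From HB Require Import structures.
From mathcomp Require Import all_boot all_order all_algebra.
From mathcomp Require Import reals.
From mathcomp Require Import ring lra.
Import Order.TTheory GRing.Theory Num.Theory.
Local Open Scope ring_scope.
Set Implicit Arguments. Unset Strict Implicit. Unset Printing Implicit Defensive.

Definition bt (n k : nat) : bool := odd (n %/ 2 ^ k).
Definition nd (n m : nat) : nat :=
  ((bt n 0 != bt m 0) + (bt n 1 != bt m 1) + (bt n 2 != bt m 2))%N.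

Section S.
Variable R : realType.
Definition sc (t : R) (b : bool) : R := if b then 1 else t.
Definition Dst (a b : R) (n : nat) : R :=
  Num.sqrt (3 * (a ^+ 2 + b ^+ 2) - 2 * a * b * (3 - 2 * n%:R)).

Lemma bits_ok (n k : nat) : (8 <= n)%N -> (n < 16)%N -> (k < 3)%N ->
  odd ((n - 8) %/ 2 ^ k) = odd (n %/ 2 ^ k).
Proof.
move=> h1 h2 hk.
have [m -> hm] : exists2 m, n = (m + 8)%N & (m < 8)%N.
  by exists (n - 8)%N; [rewrite subnK | rewrite ltn_subLR].
rewrite addnK.
case: k hk => [|[|[|]]] // _; do 8! (case: m hm => [|m] hm; first by vm_compute); by [].
Qed.

Lemma nc_coord t (i : 'I_16) (k : 'I_3) :
  nested_cubes t i ord0 k = sc t (i < 8)%N * sgb R (bt i k).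
Proof.
rewrite /nested_cubes /cube_vertex /sc /bt; case: ifP => h.
  by rewrite mxE mul1r.
rewrite !mxE bits_ok //; last by rewrite leqNgt h.
Qed.
Lemma sgb_sq (a b : R) (x y : bool) :
  (a * sgb R x - b * sgb R y) ^+ 2 = a ^+ 2 + b ^+ 2 - 2 * a * b * (1 - 2 * (x != y)%:R).
Proof. by case: x; case: y; rewrite /sgb /=; ring. Qed.

Lemma enorm_diff t (i j : 'I_16) :
  enorm (nested_cubes t j - nested_cubes t i) = Dst (sc t (j < 8)%N) (sc t (i < 8)%N) (nd j i).
Proof.
rewrite /enorm /Dst; congr Num.sqrt.
rewrite !big_ord_recr big_ord0 /= !mxE !nc_coord !sgb_sq /nd !natrD.
rewrite /=. ring.
Qed.
Definition ms (mu1 mu2 : R) (n : nat) : R := if (n < 8)%N then mu1 else mu2.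
Definition Gt (t mu1 mu2 c : R) (i k n : nat) : R :=
  if n != i then ms mu1 mu2 n * ((Dst (sc t (n < 8)%N) (sc t (i < 8)%N) (nd n i)) ^- 3 - c)
     * (sc t (n < 8)%N * sgb R (bt n k) - sc t (i < 8)%N * sgb R (bt i k)) else 0.

Lemma coord_sum t mu1 mu2 c (i : 'I_16) (k : 'I_3) :
  (\sum_(j < 16 | j != i)
     (nested_masses mu1 mu2 j * ((enorm (nested_cubes t j - nested_cubes t i)) ^- 3 - c))
       *: (nested_cubes t j - nested_cubes t i)) ord0 k
  = \sum_(0 <= n < 16) Gt t mu1 mu2 c i k n.
Proof.
rewrite summxE big_mkcond big_mkord; apply: eq_bigr => j _.
rewrite /Gt; case: eqP => [->|/eqP hne].
  by rewrite eqxx.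
have -> : (val j != val i) by [].
by rewrite !mxE enorm_diff !nc_coord.
Qed.

Lemma sum16 (F : nat -> R) : \sum_(0 <= n < 16) F n =
  F 0%N + F 1%N + F 2%N + F 3%N + F 4%N + F 5%N + F 6%N + F 7%N + F 8%N + F 9%N
  + F 10%N + F 11%N + F 12%N + F 13%N + F 14%N + F 15%N.
Proof. by rewrite /index_iota /= !big_cons big_nil addr0 !addrA. Qed.

Lemma DstC a b n : Dst a b n = Dst b a n.
Proof. by rewrite /Dst; congr Num.sqrt; ring. Qed.
Ltac ev := repeat match goal with
| |- context [nd ?a ?b] => let v := eval vm_compute in (nd a b) in change (nd a b) with v
| |- context [bt ?a ?b] => let v := eval vm_compute in (bt a b) in change (bt a b) with v
| |- context [leq ?a ?b] => let v := eval vm_compute in (leq a b) in change (leq a b) with v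
| |- context [@eq_op nat ?a ?b] => let v := eval vm_compute in (@eq_op nat a b) in change (@eq_op nat a b) with v
end.

Ltac symtac t := rewrite !sum16 /Gt; ev; rewrite /ms /sc /sgb /=; rewrite ?(DstC t 1); ring.

Lemma sym_eq t mu1 mu2 c (i k : nat) : (i < 16)%N -> (k < 3)%N ->
  \sum_(0 <= n < 16) Gt t mu1 mu2 c i k n = sgb R (bt i k) *
  (if (i < 8)%N then \sum_(0 <= n < 16) Gt t mu1 mu2 c 0 0 n
   else \sum_(0 <= n < 16) Gt t mu1 mu2 c 8 0 n).
Proof.
move=> hi hk.
do 16 (case: i hi => [_|i hi]; [case: k hk => [_|[_|[_|//]]]; symtac t|]).
done.
Qed.
End S.

Section Alg.
Variable R : realType.
Variables (t s2 s3 X Y : R).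
Definition E0 := (s3 * (1 - t)) ^- 3.
Definition E1 := Y ^- 3.
Definition E2 := X ^- 3.
Definition E3 := (s3 * (1 + t)) ^- 3.
Definition A1 : R := -2 * 2 ^- 3 - 4 * (2 * s2) ^- 3 - 2 * (2 * s3) ^- 3.
Definition B1 := (t - 1) * E0 + (t - 3) * E1 - (t + 3) * E2 - (1 + t) * E3.
Definition A2 := (1 - t) * E0 + (1 - 3 * t) * E1 - (1 + 3 * t) * E2 - (1 + t) * E3.
Definition B2 := - 2 * t * (t * 2) ^- 3 - 4 * t * (t * (2 * s2)) ^- 3 - 2 * t * (t * (2 * s3)) ^- 3.
Definition PP := A2 - t * A1.
Definition QQ := B2 - t * B1.

Definition hyps :=
  [/\ s2 ^+ 2 = 2, s3 ^+ 2 = 3, X ^+ 2 = 3 * t ^+ 2 + 2 * t + 3,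
      Y ^+ 2 = 3 * t ^+ 2 - 2 * t + 3 &
  [/\ 0 < s2, 0 < s3, 0 < X, 0 < Y & 0 < t /\ t < 1]].

Lemma A1E : hyps -> A1 = - (1/4) - s2 / 8 - s3 / 36.
Proof.
case=> hs2 hs3 _ _ [s2p s3p _ _ _].
rewrite /A1; field: hs2 hs3.
by rewrite (gt_eqF s2p) (gt_eqF s3p).
Qed.

Lemma s2b : hyps -> 1414 / 1000 <= s2 <= 1415 / 1000.
Proof. case=> hs2 _ _ _ [s2p _ _ _ _]. rewrite expr2 in hs2. apply/andP; split; nra. Qed.
Lemma s3b : hyps -> 1732 / 1000 <= s3 <= 17321 / 10000.
Proof. case=> _ hs3 _ _ [_ s3p _ _ _]. rewrite expr2 in hs3. apply/andP; split; nra. Qed.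


Lemma A1b : hyps -> - (48/100) <= A1 <= - (47/100).
Proof.
move=> H; rewrite (A1E H); have := s2b H; have := s3b H.
move=> /andP[? ?] /andP[? ?]; apply/andP; split; lra.
Qed.

Lemma Kid : hyps ->
  (1 + 3 * t) * X ^- 3 - (1 - 3 * t) * Y ^- 3 =
  t * (3 * X ^- 3 * (1 - Y ^- 2) + 3 * Y ^- 3 * (1 - X ^- 2)
       - (X - Y) ^+ 2 * X ^- 3 * Y ^- 3 / (X + Y)).
Proof.
case=> hs2 hs3 hX hY [s2p s3p Xp Yp [t0 t1]].
have XYn : X + Y != 0 by apply: lt0r_neq0; apply: addr_gt0.
field: hX hY.
by rewrite XYn (gt_eqF Xp) (gt_eqF Yp).
Qed.

Lemma XYb : hyps -> [/\ 3 <= X ^+ 2, X ^+ 2 <= 8, 8/3 <= Y ^+ 2 & Y ^+ 2 <= 4].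
Proof.
case=> hs2 hs3 hX hY [s2p s3p Xp Yp [t0 t1]].
have := sqr_ge0 (t - 1/3); rewrite hX hY => sq.
split; nra.
Qed.

Lemma ub : hyps -> [/\ 0 < X^-1, X^-1 ^+ 2 <= 1/3, 1/8 <= X^-1 ^+ 2 & X^-1 <= 5774/10000].
Proof.
move=> H; have [h1 h2 _ _] := XYb H; case: H => _ _ _ _ [_ _ Xp _ _].
have up : 0 < X^-1 by rewrite invr_gt0.
have hu : X^-1 ^+ 2 * X ^+ 2 = 1 by rewrite -exprMn mulVf ?expr1n // gt_eqF.
have u1 : X^-1 ^+ 2 <= 1/3 by nra.
split => //; first by nra.
rewrite expr2 in u1; nra.
Qed.

Lemma vb : hyps -> [/\ 0 < Y^-1, Y^-1 ^+ 2 <= 3/8, 1/4 <= Y^-1 ^+ 2, 1/2 <= Y^-1 & Y^-1 <= 6124/10000].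
Proof.
move=> H; have [_ _ h1 h2] := XYb H; case: H => _ _ _ _ [_ _ _ Yp _].
have vp : 0 < Y^-1 by rewrite invr_gt0.
have hv : Y^-1 ^+ 2 * Y ^+ 2 = 1 by rewrite -exprMn mulVf ?expr1n // gt_eqF.
have v1 : Y^-1 ^+ 2 <= 3/8 by nra.
have v2 : 1/4 <= Y^-1 ^+ 2 by nra.
rewrite expr2 in v1 v2.
split => //; rewrite ?expr2; nra.
Qed.

Lemma wzb : hyps -> [/\ (1 - t)^-1 * (1 - t) = 1, 1 <= (1 - t)^-1, (1 + t)^-1 * (1 + t) = 1,
   1/2 <= (1 + t)^-1 & (1 + t)^-1 <= 1].
Proof.
case=> _ _ _ _ [_ _ _ _ [t0 t1]].
have t1p : 0 < 1 - t by rewrite subr_gt0.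
have t2p : 0 < 1 + t by rewrite addr_gt0.
have hw : (1 - t)^-1 * (1 - t) = 1 by rewrite mulVf // gt_eqF.
have hz : (1 + t)^-1 * (1 + t) = 1 by rewrite mulVf // gt_eqF.
have wp : 0 < (1 - t)^-1 by rewrite invr_gt0.
have zp : 0 < (1 + t)^-1 by rewrite invr_gt0.
split => //; nra.
Qed.

End Alg.

Section Alg2.
Variable R : realType.
Variables (t s2 s3 X Y : R).
Local Notation hyps := (hyps t s2 s3 X Y).
Local Notation E0 := (E0 t s3).
Local Notation E1 := (E1 Y).
Local Notation E2 := (E2 X).
Local Notation E3 := (E3 t s3).
Local Notation A1 := (A1 s2 s3).
Local Notation B1 := (B1 t s3 X Y).
Lemma Eforms : hyps -> [/\ E0 = s3/9 * ((1-t)^-1)^+3, E3 = s3/9 * ((1+t)^-1)^+3,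
   E1 = (Y^-1)^+3 & E2 = (X^-1)^+3].
Proof.
case=> hs2 hs3 hX hY [s2p s3p Xp Yp [t0 t1]].
have t1p : 1 - t != 0 by rewrite gt_eqF // subr_gt0.
have t2p : 1 + t != 0 by rewrite gt_eqF // addr_gt0.
rewrite /E0 /E1 /E2 /E3 !exprVn; split => //.
  by field: hs3; rewrite t1p gt_eqF.
by field: hs3; rewrite t2p gt_eqF.
Qed.

End Alg2.

Lemma f0_lem (R : realType) (t s3 w : R) : 0 < s3 -> (1 - t) * w = 1 -> 1 <= w ->
  (t - 1) * (s3 / 9 * w ^+ 3) <= - (s3 / 9).
Proof.
move=> s3p hw w1.
have -> : (t - 1) * (s3 / 9 * w ^+ 3) = - (s3 / 9) * w ^+ 2 * ((1 - t) * w) by ring.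
rewrite hw mulr1.
have ww : 1 <= w ^+ 2 by rewrite expr2; nra.
nra.
Qed.

Lemma f1_lem (R : realType) (t v : R) : t < 1 -> 1/2 <= v -> 1/4 <= v ^+ 2 ->
  (t - 3) * v ^+ 3 <= - (1/4).
Proof.
move=> t1 v1 v2.
have vv : 1/8 <= v ^+ 3 by rewrite (exprS v 2); nra.
nra.
Qed.

Lemma f3_lem (R : realType) (t s3 z : R) : 0 < s3 -> z * (1 + t) = 1 -> 1/2 <= z ->
  (s3 / 36) <= (1 + t) * (s3 / 9 * z ^+ 3).
Proof.
move=> s3p hz z1.
have -> : (1 + t) * (s3 / 9 * z ^+ 3) = (s3 / 9) * z ^+ 2 * (z * (1 + t)) by ring.
rewrite hz mulr1.
have zz : 1/4 <= z ^+ 2 by rewrite expr2; nra.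
nra.
Qed.

Lemma delta_neg (R : realType) (t s2 s3 X Y : R) : hyps t s2 s3 X Y -> B1 t s3 X Y - A1 s2 s3 < 0.
Proof.
move=> H.
have [e0 e3 e1 e2] := Eforms H.
have [up u2 u3 u4] := ub H.
have [vp v1 v2 v3 v4] := vb H.
have [hw w1 hz z1 z2] := wzb H.
have /andP[s2l s2u] := s2b H.
have /andP[s3l s3u] := s3b H.
rewrite /B1 e0 e1 e2 e3 (A1E H).
case: H => _ _ _ _ [s2p s3p Xp Yp [t0 t1]].
have f0 := f0_lem s3p (etrans (mulrC _ _) hw) w1.
have f1 := f1_lem t1 v3 v2.
have f2 : 0 <= (t + 3) * X^-1 ^+ 3.
  by apply: mulr_ge0; [rewrite addr_ge0 // ltW | apply: exprn_ge0; apply: ltW].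
have f3 := f3_lem s3p hz z1.
clear -f0 f1 f2 f3 s2u s3l.
lra.
Qed.

Lemma g_lem (R : realType) (t w z : R) : 0 < t -> t < 1 -> (1 - t) * w = 1 -> z * (1 + t) = 1 ->
  0 < w -> 0 < z -> 4 * t <= w ^+ 2 - z ^+ 2.
Proof.
move=> t0 t1 hw hz wp zp.
have e1 : (w * z) ^+ 2 * (1 + t) ^+ 2 = w ^+ 2 * (z * (1 + t)) ^+ 2 by ring.
have e2 : (w * z) ^+ 2 * (1 - t) ^+ 2 = z ^+ 2 * ((1 - t) * w) ^+ 2 by ring.
rewrite hz expr1n mulr1 in e1; rewrite hw expr1n mulr1 in e2.
have e3 : w ^+ 2 - z ^+ 2 = (w * z) ^+ 2 * (4 * t) by rewrite -e1 -e2; ring.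
have wz : (w * z) * (1 - t ^+ 2) = 1.
  have -> : (w * z) * (1 - t ^+ 2) = ((1 - t) * w) * (z * (1 + t)) by ring.
  by rewrite hw hz mulr1.
have wz1 : 1 <= w * z.
  have tt : 0 <= t ^+ 2 by apply: sqr_ge0.
  have wzp : 0 < w * z by apply: mulr_gt0.
  clear -wz tt wzp; nra.
have wz2 : 1 <= (w * z) ^+ 2.
  by have := ler_pM ler01 ler01 wz1 wz1; rewrite mulr1 expr2.
rewrite e3 -{1}(mul1r (4 * t)); apply: ler_wpM2r => //.
by rewrite mulr_ge0 // ltW.
Qed.

Lemma br_lem (R : realType) (u v : R) : 0 < u -> u <= 5774/10000 -> u^+2 <= 1/3 -> 1/8 <= u^+2 ->
  0 < v -> v <= 6124/10000 -> v^+2 <= 3/8 -> 1/4 <= v^+2 ->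
  3 * u ^+ 3 * (1 - v ^+ 2) + 3 * v ^+ 3 * (1 - u ^+ 2) <= 104/100.
Proof.
move=> up u1 u2 u3 vp v1 v2 v3.
have u0 : 0 <= u by apply: ltW.
have v0 : 0 <= v by apply: ltW.
have a : u ^+ 3 <= 5774/10000 * (1/3) by rewrite exprS; apply: ler_pM => //; apply: exprn_ge0.
have a0 : 0 <= u ^+ 3 by apply: exprn_ge0.
have b : v ^+ 3 <= 6124/10000 * (3/8) by rewrite exprS; apply: ler_pM => //; apply: exprn_ge0.
have b0 : 0 <= v ^+ 3 by apply: exprn_ge0.
have c1 : u ^+ 3 * (1 - v ^+ 2) <= 5774/10000 * (1/3) * (3/4).
  apply: ler_pM => //; [by clear -v2; lra | by clear -v3; lra].
have c2 : v ^+ 3 * (1 - u ^+ 2) <= 6124/10000 * (3/8) * (7/8).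
  apply: ler_pM => //; [by clear -u2; lra | by clear -u3; lra].
clear -c1 c2; lra.
Qed.

Lemma PP_pos (R : realType) (t s2 s3 X Y : R) : hyps t s2 s3 X Y -> 0 < PP t s2 s3 X Y.
Proof.
move=> H.
have Hk := Kid H.
have [e0 e3 _ _] := Eforms H.
have [up u2 u3 u4] := ub H.
have [vp v1 v2 v3 v4] := vb H.
have [hw w1 hz z1 z2] := wzb H.
have /andP[s3l s3u] := s3b H.
have /andP[A1l A1u] := A1b H.
have e : PP t s2 s3 X Y = ((1 - t) * E0 t s3 - (1 + t) * E3 t s3)
   - ((1 + 3 * t) * X ^- 3 - (1 - 3 * t) * Y ^- 3) - t * A1 s2 s3.
  by rewrite /PP /A2 /E1 /E2; ring.
rewrite e Hk e0 e3 {e Hk e0 e3}.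
case: H => _ _ _ _ [s2p s3p Xp Yp [t0 t1]].
set w := (1 - t)^-1 in hw w1 *.
set z := (1 + t)^-1 in hz z1 z2 *.
have wp : 0 < w by apply: lt_le_trans w1.
have zp : 0 < z by apply: lt_le_trans z1; rewrite divr_gt0.
have hw' : (1 - t) * w = 1 by rewrite mulrC.
have f1 : (1 - t) * (s3 / 9 * w ^+ 3) - (1 + t) * (s3 / 9 * z ^+ 3) = s3 / 9 * (w ^+ 2 - z ^+ 2).
  have -> : (1 - t) * (s3 / 9 * w ^+ 3) = s3 / 9 * w ^+ 2 * ((1 - t) * w) by ring.
  have -> : (1 + t) * (s3 / 9 * z ^+ 3) = s3 / 9 * z ^+ 2 * (z * (1 + t)) by ring.
  by rewrite hw' hz !mulr1 mulrBr.
rewrite f1.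
have g := g_lem t0 t1 hw' hz wp zp.
have g2 : s3 / 9 * (4 * t) <= s3 / 9 * (w ^+ 2 - z ^+ 2).
  by apply: ler_wpM2l => //; rewrite divr_ge0 // ltW.
have bb : 3 * X ^- 3 * (1 - Y ^- 2) + 3 * Y ^- 3 * (1 - X ^- 2)
   - (X - Y) ^+ 2 * X ^- 3 * Y ^- 3 / (X + Y) <= 104/100.
  have nn : 0 <= (X - Y) ^+ 2 * X ^- 3 * Y ^- 3 / (X + Y).
    have X3 : 0 <= X ^- 3 by rewrite invr_ge0 exprn_ge0 // ltW.
    have Y3 : 0 <= Y ^- 3 by rewrite invr_ge0 exprn_ge0 // ltW.
    have XY : 0 <= (X + Y)^-1 by rewrite invr_ge0 addr_ge0 // ltW.
    by apply: mulr_ge0 => //; apply: mulr_ge0 => //; apply: mulr_ge0 => //; apply: sqr_ge0.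
  have := br_lem up u4 u2 u3 vp v4 v1 v2.
  rewrite !exprVn => hb.
  clear -nn hb; lra.
set br := (X in t * X) in bb *.
have g3 : t * br <= t * (104/100) by apply: ler_wpM2l => //; apply: ltW.
have g4 : t * (47/100) <= - (t * A1 s2 s3).
  by rewrite -mulrN; apply: ler_wpM2l; [apply: ltW | clear -A1u; lra].
have g5 : 0 < t * (4 * s3 / 9 - 57/100).
  by apply: mulr_gt0 => //; clear -s3l; lra.
clear -g2 g3 g4 g5; lra.
Qed.

Lemma poly1 (R : realType) (t : R) : 0 < t -> t < 1 ->
  - (47/100) * (1 - t) - t * t * (19/100) + t * t * (139/100) * (1 - t) < 0.
Proof. move=> h0 h1.
have h3 := sqr_ge0 (t - 73/100).
have h2 : 0 <= (t - 73/100) ^+ 2 * t by apply: mulr_ge0 => //; apply: ltW.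
nra. Qed.

Lemma poly2 (R : realType) (t w : R) : 0 < t -> t < 1 -> (1 - t) * w = 1 ->
  - (47/100) + t ^+ 2 * (139/100 - 19/100 * w) < 0.
Proof.
move=> t0 t1 hw.
have e : (1 - t) * (- (47/100) + t ^+ 2 * (139/100 - 19/100 * w)) =
   - (47/100) * (1 - t) - t * t * (19/100) + t * t * (139/100) * (1 - t)
   - t ^+ 2 * (19/100) * ((1 - t) * w - 1) by ring.
rewrite hw subrr mulr0 subr0 in e.
have := poly1 t0 t1; rewrite -e pmulr_rlt0 // subr_gt0 //.
Qed.

Lemma QP_neg (R : realType) (t s2 s3 X Y : R) : hyps t s2 s3 X Y ->
  QQ t s2 s3 X Y - PP t s2 s3 X Y < 0.
Proof.
move=> H.
have [e0 e3 e1 e2] := Eforms H.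
have [up u2 u3 u4] := ub H.
have [vp v1 v2 v3 v4] := vb H.
have [hw w1 hz z1 z2] := wzb H.
have /andP[s3l s3u] := s3b H.
have /andP[A1l A1u] := A1b H.
have hB2 : t ^+ 2 * B2 t s2 s3 = A1 s2 s3.
  case: H => _ _ _ _ [s2p s3p _ _ [t0 _]].
  by rewrite /B2 /A1; field; rewrite !gt_eqF.
have e : t ^+ 2 * (QQ t s2 s3 X Y - PP t s2 s3 X Y) = t ^+ 2 * B2 t s2 s3 + t ^+ 3 * A1 s2 s3
   - t ^+ 2 * ((1 - t) ^+ 2 * E0 t s3 + (t ^+ 2 - 6 * t + 1) * E1 Y
               - (t ^+ 2 + 6 * t + 1) * E2 X - (1 + t) ^+ 2 * E3 t s3).
  by rewrite /QQ /PP /B1 /A2; ring.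
rewrite hB2 e0 e1 e2 e3 in e.
case: H => _ _ hX hY [s2p s3p Xp Yp [t0 t1]].
have t2p : 0 < t ^+ 2 by apply: exprn_gt0.
rewrite -(pmulr_rlt0 _ t2p) e {e}.
set w := (1 - t)^-1 in hw w1 *.
set z := (1 + t)^-1 in hz z1 z2 *.
set u := X^-1 in up u2 u3 u4 *.
set v := Y^-1 in vp v1 v2 v3 v4 *.
have hw' : (1 - t) * w = 1 by rewrite mulrC.
have f0 : (1 - t) ^+ 2 * (s3 / 9 * w ^+ 3) = s3 / 9 * w.
  have -> : (1 - t) ^+ 2 * (s3 / 9 * w ^+ 3) = s3 / 9 * w * ((1 - t) * w) ^+ 2 by ring.
  by rewrite hw' expr1n mulr1.
have f3 : (1 + t) ^+ 2 * (s3 / 9 * z ^+ 3) = s3 / 9 * z.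
  have -> : (1 + t) ^+ 2 * (s3 / 9 * z ^+ 3) = s3 / 9 * z * (z * (1 + t)) ^+ 2 by ring.
  by rewrite hz expr1n mulr1.
rewrite f0 f3.
have uX : u ^+ 3 * (3 * t ^+ 2 + 2 * t + 3) = u.
  rewrite -hX; have -> : u ^+ 3 * X ^+ 2 = u * (u * X) ^+ 2 by ring.
  by rewrite /u mulVf ?expr1n ?mulr1 // gt_eqF.
have vY : v ^+ 3 * (3 * t ^+ 2 - 2 * t + 3) = v.
  rewrite -hY; have -> : v ^+ 3 * Y ^+ 2 = v * (v * Y) ^+ 2 by ring.
  by rewrite /v mulVf ?expr1n ?mulr1 // gt_eqF.
have u0 : 0 <= u ^+ 3 by apply: exprn_ge0; apply: ltW.
have v0 : 0 <= v ^+ 3 by apply: exprn_ge0; apply: ltW.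
have T2 : (t ^+ 2 + 6 * t + 1) * u ^+ 3 <= u.
  have -> : (t ^+ 2 + 6 * t + 1) * u ^+ 3 = u ^+ 3 * (3 * t ^+ 2 + 2 * t + 3) - 2 * ((1 - t) ^+ 2 * u ^+ 3) by ring.
  rewrite uX gerBl; apply: mulr_ge0 => //; apply: mulr_ge0 => //; apply: sqr_ge0.
have T1 : - ((t ^+ 2 - 6 * t + 1) * v ^+ 3) <= v.
  have -> : - ((t ^+ 2 - 6 * t + 1) * v ^+ 3) = v ^+ 3 * (3 * t ^+ 2 - 2 * t + 3) - 4 * ((1 - t) ^+ 2 * v ^+ 3) by ring.
  rewrite vY gerBl; apply: mulr_ge0 => //; apply: mulr_ge0 => //; apply: sqr_ge0.
have S1 : s3 / 9 * z <= 1925/10000.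
  have : s3 / 9 * z <= s3 / 9 * 1 by apply: ler_wpM2l => //; rewrite divr_ge0 // ltW.
  by rewrite mulr1 => h; clear -h s3u; lra.
have wp : 0 <= w by apply: le_trans w1.
have S2 : 19/100 * w <= s3 / 9 * w by apply: ler_wpM2r => //; clear -s3l; lra.
have K : - (s3 / 9 * w + (t ^+ 2 - 6 * t + 1) * v ^+ 3 - (t ^+ 2 + 6 * t + 1) * u ^+ 3 - s3 / 9 * z)
   <= 139/100 - 19/100 * w.
  by clear -S1 S2 T1 T2 u4 v4; lra.
have K2 := ler_wpM2l (ltW t2p) K.
have A3 : A1 s2 s3 * t ^+ 3 <= 0.
  by rewrite mulr_le0_ge0 //; [clear -A1u; lra | apply: exprn_ge0; apply: ltW].
have P2 := poly2 t0 t1 hw'.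
move: K2 A3 P2 A1u; clear; move=> K2 A3 P2 A1u.
rewrite mulrN in K2.
lra.
Qed.

Lemma nz_facts (R : realType) (t s2 s3 X Y : R) : hyps t s2 s3 X Y ->
  [/\ s2 != 0, s3 != 0, X != 0, Y != 0 &
  [/\ t != 0, 1 - t != 0, 1 + t != 0, t - 1 != 0 & t + 1 != 0]].
Proof.
case=> _ _ _ _ [s2p s3p Xp Yp [t0 t1]].
have a : 1 - t != 0 by rewrite gt_eqF // subr_gt0.
have b : 1 + t != 0 by rewrite gt_eqF // addr_gt0.
have c : t - 1 != 0 by rewrite -oppr_eq0 opprB.
have d : t + 1 != 0 by rewrite addrC.
by split; [rewrite gt_eqF|rewrite gt_eqF|rewrite gt_eqF|rewrite gt_eqF|split; first rewrite gt_eqF].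
Qed.

Lemma g1_id (R : realType) (t s2 s3 X Y : R) : hyps t s2 s3 X Y ->
  - ((2 * s3 + 9 * s2 + 18) * t
     - 72 * (t ^+ 2 + 6 * t + 1) / X ^+ 3
     + 72 * (t ^+ 2 - 6 * t + 1) / Y ^+ 3
     - 8 * s3 / (t + 1) - 8 * s3 / (t - 1)
     + (2 * s3 + 9 * s2 + 18) / t ^+ 2) = 72 * (QQ t s2 s3 X Y - PP t s2 s3 X Y).
Proof.
move=> H; have [n1 n2 n3 n4 [n5 n6 n7 n8 n9]] := nz_facts H.
case: H => hs2 hs3 _ _ _.
rewrite /QQ /PP /A1 /B1 /A2 /B2 /E0 /E1 /E2 /E3.
field: hs2 hs3.
by rewrite n1 n2 n3 n4 n5 n6 n7 n8.
Qed.

Lemma g0_id (R : realType) (t s2 s3 X Y : R) : hyps t s2 s3 X Y ->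
  - (9 * (3 * t + 1) * (t + 3)) / (3 * t ^+ 2 + 2 * t + 3) ^+ 3
  + 9 * (3 * t - 1) * (t - 3) / (3 * t ^+ 2 - 2 * t + 3) ^+ 3
  + (6 * s3 * s2 + 12 * s3 + 54 * s2 + 83) / (96 * t ^+ 2)
  - 4 * s3 / (X ^+ 3 * (t + 1))
  - 2 * s3 / (Y ^+ 3 * (t + 1))
  - 2 * s3 / (X ^+ 3 * (t - 1))
  - 4 * s3 / (Y ^+ 3 * (t - 1))
  - 144 * t / (X ^+ 3 * Y ^+ 3)
  - 1 / (3 * (t + 1) ^+ 4)
  + 1 / (3 * (t - 1) ^+ 4)
  = 9 * (QQ t s2 s3 X Y * A1 s2 s3 - PP t s2 s3 X Y * B1 t s3 X Y).
Proof.
move=> H; have [n1 n2 n3 n4 [n5 n6 n7 n8 n9]] := nz_facts H.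
case: H => hs2 hs3 hX hY [_ _ Xp Yp _].
have PAn : 3 * t ^+ 2 + 2 * t + 3 != 0 by rewrite -hX gt_eqF // exprn_gt0.
have PBn : 3 * t ^+ 2 - 2 * t + 3 != 0 by rewrite -hY gt_eqF // exprn_gt0.
rewrite /QQ /PP /A1 /B1 /A2 /B2 /E0 /E1 /E2 /E3.
field: hs2 hs3 hX hY.
by rewrite n1 n2 n3 n4 n5 n6 n7 n8 PAn PBn.
Qed.

Lemma num_id (R : realType) (t s2 s3 X Y cf : R) : hyps t s2 s3 X Y ->
  24 * cf - (s3 * t + s3) / (3 * (t + 1) ^+ 3) - 3 * (t + 3) / X ^+ 3
  + 3 * (t - 3) / Y ^+ 3 - (s3 * t - s3) / (3 * (t - 1) ^+ 3)
  = 3 * (8 * cf + B1 t s3 X Y).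
Proof.
move=> H; have [n1 n2 n3 n4 [n5 n6 n7 n8 n9]] := nz_facts H.
case: H => hs2 hs3 _ _ _.
rewrite /B1 /E0 /E1 /E2 /E3.
field: hs3.
by rewrite ?n1 ?n2 ?n3 ?n4 ?n5 ?n6 ?n7 ?n8 ?n9.
Qed.

Lemma den_id (R : realType) (t s2 s3 X Y cf : R) : hyps t s2 s3 X Y ->
  24 * cf - s3 / 12 - 3 * s2 / 8 - 3 / 4 = 3 * (8 * cf + A1 s2 s3).
Proof.
move=> H; have [n1 n2 n3 n4 [n5 n6 n7 n8 n9]] := nz_facts H.
case: H => hs2 hs3 _ _ _.
rewrite /A1.
field: hs2 hs3.
by rewrite ?n1 ?n2 ?n3 ?n4 ?n5 ?n6 ?n7 ?n8 ?n9.
Qed.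

Lemma ratio_lem (R : realType) (A1 B1 P Q g0 g1 : R) : P != 0 -> Q - P != 0 -> B1 - A1 != 0 ->
  g1 = 72 * (Q - P) -> g0 = 9 * (Q * A1 - P * B1) ->
  - (3 * (8 * (- g0 / g1) + B1)) / (3 * (8 * (- g0 / g1) + A1)) = - Q / P.
Proof.
move=> Pn QPn dn -> ->.
have e1 : 8 * (- (9 * (Q * A1 - P * B1)) / (72 * (Q - P))) + B1 = Q * (B1 - A1) / (Q - P).
  by field.
have e2 : 8 * (- (9 * (Q * A1 - P * B1)) / (72 * (Q - P))) + A1 = P * (B1 - A1) / (Q - P).
  by field.
rewrite e1 e2; field.
by rewrite Pn QPn dn.
Qed.

Lemma hyps_ok (R : realType) (t : R) : 0 < t -> t < 1 ->
  hyps t (Num.sqrt 2) (Num.sqrt 3) (Num.sqrt (3 * t ^+ 2 + 2 * t + 3))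
    (Num.sqrt (3 * t ^+ 2 - 2 * t + 3)).
Proof.
move=> t0 t1.
have pa : 0 < 3 * t ^+ 2 + 2 * t + 3.
  have : 0 <= t ^+ 2 by apply: sqr_ge0.
  move=> h; clear t1; lra.
have pb : 0 < 3 * t ^+ 2 - 2 * t + 3.
  have := sqr_ge0 (t - 1/3); move=> h; clear t1; nra.
split; rewrite ?sqr_sqrtr ?ltW //.
by split; rewrite ?sqrtr_gt0.
Qed.

Lemma mass_ratio_eq (R : realType) (t : R) : 0 < t -> t < 1 ->
  let s2 := Num.sqrt 2 in let s3 := Num.sqrt 3 in
  let X := Num.sqrt (3 * t ^+ 2 + 2 * t + 3) in let Y := Num.sqrt (3 * t ^+ 2 - 2 * t + 3) in
  mass_ratio t = - QQ t s2 s3 X Y / PP t s2 s3 X Y.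
Proof.
move=> t0 t1 s2 s3 X Y.
have H : hyps t s2 s3 X Y by exact: hyps_ok.
rewrite /mass_ratio /cfun /gamma0 /gamma1 /pow32 /PA /PB -/s2 -/s3 -/X -/Y.
rewrite (num_id _ H) (den_id _ H).
apply: ratio_lem.
- by rewrite (gt_eqF (PP_pos H)).
- by rewrite (lt_eqF (QP_neg H)).
- by rewrite (lt_eqF (delta_neg H)).
- exact: g1_id.
- exact: g0_id.
Qed.

Section Vals.
Variable R : realType.

Lemma sqrt_sq_mul (a b : R) : 0 <= a -> Num.sqrt (a ^+ 2 * b) = a * Num.sqrt b.
Proof. by move=> a0; rewrite sqrtrM ?sqr_ge0 // sqrtr_sqr ger0_norm. Qed.

Lemma D111 : Dst (1 : R) 1 1 = 2.
Proof.
have e : (3 * (1 ^+ 2 + 1 ^+ 2) - 2 * 1 * 1 * (3 - 2 * 1%:R) : R) = 2 ^+ 2 * 1 by ring.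
by rewrite /Dst e sqrt_sq_mul // sqrtr1 mulr1.
Qed.
Lemma D112 : Dst (1 : R) 1 2 = 2 * Num.sqrt 2.
Proof.
have e : (3 * (1 ^+ 2 + 1 ^+ 2) - 2 * 1 * 1 * (3 - 2 * 2%:R) : R) = 2 ^+ 2 * 2 by ring.
by rewrite /Dst e sqrt_sq_mul.
Qed.
Lemma D113 : Dst (1 : R) 1 3 = 2 * Num.sqrt 3.
Proof.
have e : (3 * (1 ^+ 2 + 1 ^+ 2) - 2 * 1 * 1 * (3 - 2 * 3%:R) : R) = 2 ^+ 2 * 3 by ring.
by rewrite /Dst e sqrt_sq_mul.
Qed.
Lemma Dtt (t : R) n : 0 <= t -> Dst t t n = t * Dst 1 1 n.
Proof.
move=> t0; rewrite /Dst -sqrt_sq_mul //; congr Num.sqrt; ring.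
Qed.
Lemma D1t0 (t : R) : t <= 1 -> Dst 1 t 0 = Num.sqrt 3 * (1 - t).
Proof.
move=> t1.
have e : (3 * (1 ^+ 2 + t ^+ 2) - 2 * 1 * t * (3 - 2 * 0%:R) : R) = (1 - t) ^+ 2 * 3 by ring.
rewrite /Dst e sqrt_sq_mul; [by rewrite mulrC | by rewrite subr_ge0].
Qed.
Lemma D1t3 (t : R) : 0 <= t -> Dst 1 t 3 = Num.sqrt 3 * (1 + t).
Proof.
move=> t0.
have e : (3 * (1 ^+ 2 + t ^+ 2) - 2 * 1 * t * (3 - 2 * 3%:R) : R) = (1 + t) ^+ 2 * 3 by ring.
rewrite /Dst e sqrt_sq_mul; [by rewrite mulrC | by rewrite addr_ge0].
Qed.
Lemma D1t1 (t : R) : Dst 1 t 1 = Num.sqrt (3 * t ^+ 2 - 2 * t + 3).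
Proof. by rewrite /Dst; congr Num.sqrt; ring. Qed.
Lemma D1t2 (t : R) : Dst 1 t 2 = Num.sqrt (3 * t ^+ 2 + 2 * t + 3).
Proof. by rewrite /Dst; congr Num.sqrt; ring. Qed.
End Vals.

Ltac ev2 := repeat match goal with
| |- context [nd ?a ?b] => let v := eval vm_compute in (nd a b) in change (nd a b) with v
| |- context [bt ?a ?b] => let v := eval vm_compute in (bt a b) in change (bt a b) with v
| |- context [leq ?a ?b] => let v := eval vm_compute in (leq a b) in change (leq a b) with v
| |- context [@eq_op nat ?a ?b] => let v := eval vm_compute in (@eq_op nat a b) in change (@eq_op nat a b) with v
end.

Lemma O_eq (R : realType) (t mu1 mu2 c : R) : 0 < t -> t < 1 ->
  \sum_(0 <= n < 16) Gt t mu1 mu2 c 0 0 n =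
  mu1 * (A1 (Num.sqrt 2) (Num.sqrt 3) + 8 * c) +
  mu2 * (B1 t (Num.sqrt 3) (Num.sqrt (3 * t ^+ 2 + 2 * t + 3)) (Num.sqrt (3 * t ^+ 2 - 2 * t + 3)) + 8 * c).
Proof.
move=> t0 t1.
rewrite sum16 /Gt; ev2; rewrite /ms /sc /sgb /=.
rewrite ?(DstC t 1) D111 D112 D113 (D1t0 (ltW t1)) (D1t3 (ltW t0)) D1t1 D1t2.
rewrite /A1 /B1 /E0 /E1 /E2 /E3.
ring.
Qed.

Lemma I_eq (R : realType) (t mu1 mu2 c : R) : 0 < t -> t < 1 ->
  \sum_(0 <= n < 16) Gt t mu1 mu2 c 8 0 n =
  mu1 * (A2 t (Num.sqrt 3) (Num.sqrt (3 * t ^+ 2 + 2 * t + 3)) (Num.sqrt (3 * t ^+ 2 - 2 * t + 3)) + 8 * t * c) +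
  mu2 * (B2 t (Num.sqrt 2) (Num.sqrt 3) + 8 * t * c).
Proof.
move=> t0 t1.
rewrite sum16 /Gt; ev2; rewrite /ms /sc /sgb /=.
rewrite ?(DstC t 1) !(Dtt _ (ltW t0)) D111 D112 D113 (D1t0 (ltW t1)) (D1t3 (ltW t0)) D1t1 D1t2.
rewrite /A2 /B2 /E0 /E1 /E2 /E3.
ring.
Qed.

Lemma sys_lem (R : realType) (x y A1 B1 A2 B2 t : R) : y != 0 ->
  A2 - t * A1 != 0 -> (B2 - t * B1) - (A2 - t * A1) != 0 -> B1 - A1 != 0 ->
  (exists c, x * (A1 + 8 * c) + y * (B1 + 8 * c) = 0 /\
             x * (A2 + 8 * t * c) + y * (B2 + 8 * t * c) = 0)
  <-> x / y = - (B2 - t * B1) / (A2 - t * A1).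
Proof.
set P := A2 - t * A1; set Q := B2 - t * B1.
move=> yn Pn QPn dn; split.
- case=> c [h1 h2].
  have h3 : x * P + y * Q = 0.
    transitivity ((x * (A2 + 8 * t * c) + y * (B2 + 8 * t * c)) - t * (x * (A1 + 8 * c) + y * (B1 + 8 * c))).
      by rewrite /P /Q; ring.
    by rewrite h1 h2 mulr0 subr0.
  apply/eqP; rewrite eqr_div // -subr_eq0; apply/eqP.
  by transitivity (x * P + y * Q); [ring | exact: h3].
- move=> hx.
  have hx' : x = - Q / P * y by rewrite -hx mulfVK.
  have h3 : x * P + y * Q = 0 by rewrite hx'; field.
  have xy : x + y != 0.
    have -> : x + y = y * (P - Q) / P by rewrite hx'; field.
    rewrite mulf_neq0 ?invr_eq0 // mulf_neq0 //.
    by rewrite -oppr_eq0 opprB.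
  exists (- (x * A1 + y * B1) / (8 * (x + y))).
  have h1 : x * (A1 + 8 * (- (x * A1 + y * B1) / (8 * (x + y)))) +
            y * (B1 + 8 * (- (x * A1 + y * B1) / (8 * (x + y)))) = 0.
    by field; rewrite xy.
  split => //.
  set c := (- (x * A1 + y * B1) / (8 * (x + y))) in h1 *.
  transitivity ((x * P + y * Q) + t * (x * (A1 + 8 * c) + y * (B1 + 8 * c))).
    by rewrite /P /Q; ring.
  by rewrite h3 h1 mulr0 addr0.
Qed.

Lemma nd_check : all (fun i => all (fun j => (nd j i != 0%N) || ((j < 8)%N != (i < 8)%N) || (j == i))
  (iota 0 16)) (iota 0 16).
Proof. by vm_compute. Qed.

Lemma distinct_ok (R : realType) (t : R) : 0 < t -> t < 1 ->
  forall i j : 'I_16, i != j -> nested_cubes t i != nested_cubes t j.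
Proof.
move=> t0 t1 i j hij; apply/negP => /eqP heq.
have := enorm_diff t i j.
have -> : enorm (nested_cubes t j - nested_cubes t i) = 0.
  rewrite heq subrr /enorm big1 ?sqrtr0 // => k _.
  by rewrite mxE expr0n.
move/esym/eqP; rewrite /Dst sqrtr_eq0.
set a := sc t (j < 8)%N; set b := sc t (i < 8)%N; set n := nd j i.
have ap : 0 < a by rewrite /a /sc; case: ifP.
have bp : 0 < b by rewrite /b /sc; case: ifP.
have -> : 3 * (a ^+ 2 + b ^+ 2) - 2 * a * b * (3 - 2 * n%:R) =
  3 * (a - b) ^+ 2 + 4 * (a * b) * n%:R by ring.
move=> hle.
have s1 := sqr_ge0 (a - b).
have s2 : 0 <= 4 * (a * b) * n%:R by rewrite !mulr_ge0 // ltW // mulr_gt0.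
have e1 : (a - b) ^+ 2 = 0 by clear -hle s1 s2; lra.
have e2 : 4 * (a * b) * n%:R = 0 by clear -hle s1 s2; lra.
move/eqP: e1; rewrite sqrf_eq0 subr_eq0 => /eqP eab.
have hab : 4 * (a * b) != 0 by rewrite gt_eqF // mulr_gt0 // mulr_gt0.
move/eqP: e2; rewrite mulf_eq0 (negbTE hab) /= pnatr_eq0 => /eqP n0.
have cube : (j < 8)%N = (i < 8)%N.
  move: eab; rewrite /a /b /sc.
  case: (j < 8)%N; case: (i < 8)%N => // h.
  - by move: t1; rewrite -h ltxx.
  - by move: t1; rewrite h ltxx.
have hi : (nat_of_ord i) \in iota 0 16 by rewrite mem_iota /=.
have hj : (nat_of_ord j) \in iota 0 16 by rewrite mem_iota /=.
have := allP nd_check _ hi.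
move=> /allP /(_ _ hj).
rewrite -/n n0 cube !eqxx /= => hji.
by move: hij; rewrite eq_sym -(inj_eq val_inj) hji.
Qed.

Lemma cc_iff (R : realType) (t mu1 mu2 : R) : 0 < t -> t < 1 ->
  central_configuration (nested_cubes t) (nested_masses mu1 mu2) <->
  exists c, \sum_(0 <= n < 16) Gt t mu1 mu2 c 0 0 n = 0 /\
            \sum_(0 <= n < 16) Gt t mu1 mu2 c 8 0 n = 0.
Proof.
move=> t0 t1; split.
- case=> _ [c hc]; exists c; split.
  + have := congr1 (fun v : 'rV[R]_3 => v ord0 ord0) (hc (@Ordinal 16 0 isT)).
    by rewrite /= coord_sum mxE.
  + have := congr1 (fun v : 'rV[R]_3 => v ord0 ord0) (hc (@Ordinal 16 8 isT)).
    by rewrite /= coord_sum mxE.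
- case=> c [hO hI]; split; first exact: distinct_ok.
  exists c => i; apply/rowP => k.
  rewrite coord_sum mxE (sym_eq _ _ _ _ (ltn_ord i) (ltn_ord k)).
  by case: ifP => _; rewrite ?hO ?hI mulr0.
Qed.

Unset Implicit Arguments.
Theorem theorem10 (R : realType) (t mu1 mu2 : R) :
  0 < t -> t < 1 -> mu2 != 0 ->
  (central_configuration (nested_cubes t) (nested_masses mu1 mu2)
   <-> mu1 / mu2 = mass_ratio t).
Proof.
move=> t0 t1 mu2n.
have H := hyps_ok t0 t1.
rewrite (mass_ratio_eq t0 t1) /=.
have Pn := gt_eqF (PP_pos H); have QPn := lt_eqF (QP_neg H); have dn := lt_eqF (delta_neg H).
rewrite /QQ /PP in Pn QPn *.
rewrite -(sys_lem mu1 mu2n) ?Pn ?QPn ?dn //.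
rewrite cc_iff //; split; case=> c [h1 h2]; exists c.
- by rewrite -(O_eq mu1 mu2 c t0 t1) -(I_eq mu1 mu2 c t0 t1).
- by rewrite (O_eq mu1 mu2 c t0 t1) (I_eq mu1 mu2 c t0 t1).
Qed.
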